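(* Let $0\le\alpha\le 1$ and $\beta>0$. Then $D_{\alpha,\beta}$ is a metric on the collection of all finite subsets of $\mathbb N$ if and only if $0\le\alpha\le \tfrac12$ and $\beta\ge \dfrac{1}{1-\alpha}$.
   Context: For finite sets $X,Y$ let $m(X,Y)=\min\{|X\setminus Y|,|Y\setminus X|\}$ and $M(X,Y)=\max\{|X\setminus Y|,|Y\setminus X|\}$. For $0\le\alpha\le1$ and $\beta>0$ the Tversky semimetric is $$D_{\alpha,\beta}(X,Y)=\begin{cases}\beta\,\dfrac{\alpha m(X,Y)+(1-\alpha)M(X,Y)}{|X\cap Y|+\beta\big(\alpha m(X,Y)+(1-\alpha)M(X,Y)\big)} & \text{if } X\cup Y\neq\emptyset,\\[2mm] 0 & \text{if } X=Y=\emptyset.\end{cases}$$ A metric is a function $d$ with $d(x,y)\ge0$, $d(x,y)=0$ iff $x=y$, $d(x,y)=d(y,x)$, and $d(x,y)\le d(x,z)+d(z,y)$. *)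

(* Defs.v *)
From HB Require Import structures.
From mathcomp Require Import all_boot all_order all_algebra finmap.
From mathcomp Require Import reals.
Set Implicit Arguments. Unset Strict Implicit. Unset Printing Implicit Defensive.
Import Order.TTheory GRing.Theory Num.Theory.
Local Open Scope fset_scope.
Local Open Scope ring_scope.

Definition msd (X Y : {fset nat}) : nat := minn #|` X `\` Y| #|` Y `\` X|.
Definition Msd (X Y : {fset nat}) : nat := maxn #|` X `\` Y| #|` Y `\` X|.

Definition tversky (R : realType) (alpha beta : R) (X Y : {fset nat}) : R :=
  if X `|` Y == fset0 then 0
  else
    let t := alpha * (msd X Y)%:R + (1 - alpha) * (Msd X Y)%:R in
    beta * t / ((#|` X `&` Y|)%:R + beta * t).

Definition is_metric (R : realType) (T : Type) (d : T -> T -> R) : Prop :=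
  [/\ (forall x y, 0 <= d x y),
      (forall x y, d x y = 0 <-> x = y),
      (forall x y, d x y = d y x) &
      (forall x y z, d x y <= d x z + d z y)].

(* Main.v *)
Require Import Defs.
From HB Require Import structures.
From mathcomp Require Import all_boot all_order all_algebra finmap.
From mathcomp Require Import reals.
From mathcomp Require Import ring lra zify.
Import Order.TTheory GRing.Theory Num.Theory.
Local Open Scope ring_scope.
Set Implicit Arguments. Unset Strict Implicit. Unset Printing Implicit Defensive.

Definition rf (R : realType) (x y : R) := x / (y + x).

Lemma rf_ge0 (R : realType) (x y : R) : 0 <= x -> 0 <= y -> 0 <= rf x y.
Proof. by move=> hx hy; rewrite /rf divr_ge0 // addr_ge0. Qed.

Lemma rf_mono (R : realType) (x x' y y' : R) : 0 <= x -> x <= x' -> 0 <= y' -> y' <= y ->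
  rf x y <= rf x' y'.
Proof.
move=> hx hxx hy' hyy.
have [->|xpos] := eqVneq x 0; first by rewrite /rf mul0r rf_ge0 //; lra.
have xp : 0 < x by rewrite lt_def xpos.
rewrite /rf ler_pdivrMr; last by lra.
rewrite mulrAC ler_pdivlMr; last by lra.
nra.
Qed.

Lemma rf_split (R : realType) (A B e : R) :
  rf (A + B) e = rf A (B + e) + rf B (A + e).
Proof.
rewrite /rf.
have -> : B + e + A = e + (A + B) by ring.
have -> : A + e + B = e + (A + B) by ring.
by rewrite -mulrDl.
Qed.

Definition tt (R : realType) (al : R) (a b : nat) :=
  al * (minn a b)%:R + (1 - al) * (maxn a b)%:R.

Lemma tt_alt (R : realType) (al : R) a b :
  tt al a b = al * (a + b)%:R + (1 - 2 * al) * (maxn a b)%:R.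
Proof. by rewrite /tt -(addn_min_max a b) natrD; ring. Qed.


Lemma tt_sub (R : realType) (al : R) (h0 : 0 <= al) (h1 : al <= 2^-1) a1 a2 b1 b2 : tt al (a1 + a2) (b1 + b2) <= tt al a1 b1 + tt al a2 b2.
Proof.
rewrite !tt_alt.
have hm : (maxn (a1 + a2) (b1 + b2) <= maxn a1 b1 + maxn a2 b2)%N.
  by rewrite geq_max; apply/andP; split; apply: leq_add; rewrite ?leq_maxl ?leq_maxr.
have : (maxn (a1 + a2) (b1 + b2))%:R <= (maxn a1 b1)%:R + (maxn a2 b2)%:R :> R.
  by rewrite -natrD ler_nat.
have h2 : 0 <= 1 - 2 * al by lra.
move=> H; have := ler_wpM2l h2 H.
rewrite !natrD; lra.
Qed.

Lemma tt_mono (R : realType) (al : R) (h0 : 0 <= al) (h1 : al <= 2^-1) a b a' b' : (a <= a')%N -> (b <= b')%N -> tt al a b <= tt al a' b'.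
Proof.
move=> ha hb; rewrite !tt_alt.
have : (maxn a b)%:R <= (maxn a' b')%:R :> R.
  by rewrite ler_nat geq_max !leq_max ha hb orbT.
have : (a + b)%:R <= (a' + b')%:R :> R by rewrite ler_nat leq_add.
have h2 : 0 <= 1 - 2 * al by lra.
nra.
Qed.

Lemma tt_ge (R : realType) (al : R) (h0 : 0 <= al) (h1 : al <= 2^-1) a b : (1 - al) * a%:R <= tt al a b /\ (1 - al) * b%:R <= tt al a b.
Proof.
rewrite tt_alt natrD.
have : a%:R <= (maxn a b)%:R :> R by rewrite ler_nat leq_maxl.
have : b%:R <= (maxn a b)%:R :> R by rewrite ler_nat leq_maxr.
have : 0 <= a%:R :> R by [].
have : 0 <= b%:R :> R by [].
have h2 : 0 <= 1 - 2 * al by lra.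
split; nra.
Qed.

Lemma tt_ge0 (R : realType) (al : R) (h0 : 0 <= al) (h1 : al <= 2^-1) a b : 0 <= tt al a b.
Proof. have [H _] := tt_ge h0 h1 a b; apply: le_trans H; apply: mulr_ge0 => //; lra. Qed.

Local Open Scope fset_scope.
Local Open Scope ring_scope.

Lemma tv_eq (R : realType) (al be : R) X Y :
  tversky al be X Y = rf (be * tt al #|` X `\` Y| #|` Y `\` X|) (#|` X `&` Y|)%:R.
Proof.
rewrite /tversky /tt /msd /Msd; case: ifP => // /eqP H.
have HX : X = fset0 by apply/eqP; move/eqP: H; rewrite fsetU_eq0 => /andP[].
have HY : Y = fset0 by apply/eqP; move/eqP: H; rewrite fsetU_eq0 => /andP[].
by rewrite HX HY fsetDv fset0I cardfs0 /rf /= !mulr0 addr0 mulr0 mul0r.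
Qed.


Lemma tv_tri (R : realType) (al be : R) X Y Z :
  0 <= al -> al <= 2^-1 -> 1 <= be * (1 - al) -> 0 < be ->
  tversky al be X Y <= tversky al be X Z + tversky al be Z Y.
Proof.
move=> h0 h1 hb bp.
rewrite !tv_eq.
set p := #|` (X `\` Y) `\` Z|; set v := #|` (X `\` Y) `&` Z|.
set w := #|` (Y `\` X) `&` Z|; set q := #|` (Y `\` X) `\` Z|.
set e := #|` (X `&` Y) `&` Z|.
have hxy : #|` X `\` Y| = (v + p)%N by rewrite /v /p cardfsID.
have hyx : #|` Y `\` X| = (q + w)%N by rewrite /w /q addnC cardfsID.
have hc : (e <= #|` X `&` Y|)%N by rewrite -(cardfsID Z (X `&` Y)) leq_addr.
have hc1 : #|` X `&` Z| = (e + v)%N.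
  rewrite -(cardfsID Y (X `&` Z)) /e /v; congr (_ + _)%N; congr (#|` _ |); apply/fsetP => x; rewrite !inE;
  by case: (x \in X); case: (x \in Y); case: (x \in Z).
have hc2 : #|` Z `&` Y| = (e + w)%N.
  rewrite -(cardfsID X (Z `&` Y)) /e /w; congr (_ + _)%N; congr (#|` _ |); apply/fsetP => x; rewrite !inE;
  by case: (x \in X); case: (x \in Y); case: (x \in Z).
have sp : (p <= #|` X `\` Z|)%N.
  by apply: fsubset_leq_card; apply/fsubsetP => x; rewrite !inE;
  case: (x \in X); case: (x \in Y); case: (x \in Z).
have sw : (w <= #|` Z `\` X|)%N.
  by apply: fsubset_leq_card; apply/fsubsetP => x; rewrite !inE;
  case: (x \in X); case: (x \in Y); case: (x \in Z).
have sv : (v <= #|` Z `\` Y|)%N.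
  by apply: fsubset_leq_card; apply/fsubsetP => x; rewrite !inE;
  case: (x \in X); case: (x \in Y); case: (x \in Z).
have sq : (q <= #|` Y `\` Z|)%N.
  by apply: fsubset_leq_card; apply/fsubsetP => x; rewrite !inE;
  case: (x \in X); case: (x \in Y); case: (x \in Z).
set A := be * tt al p w; set B := be * tt al v q.
have A0 : 0 <= A by rewrite mulr_ge0 ?tt_ge0 // ltW.
have B0 : 0 <= B by rewrite mulr_ge0 ?tt_ge0 // ltW.
have vB : v%:R <= B.
  have [H _] := tt_ge h0 h1 v q.
  have v0 : 0 <= v%:R :> R by [].
  rewrite /B; nra.
have wA : w%:R <= A.
  have [_ H] := tt_ge h0 h1 p w.
  have w0 : 0 <= w%:R :> R by [].
  rewrite /A; nra.
have e0 : 0 <= e%:R :> R by [].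
apply: (@le_trans _ _ (rf (A + B) e%:R)).
  apply: rf_mono => //.
  - by rewrite mulr_ge0 ?tt_ge0 // ltW.
  - rewrite hxy hyx /A /B -mulrDr ler_pM2l //.
    rewrite addrC; exact: tt_sub.
  - by rewrite ler_nat.
rewrite rf_split; apply: lerD; apply: rf_mono => //.
- rewrite /A ler_pM2l //; exact: tt_mono.
- by rewrite hc1 natrD addrC lerD2r.
- rewrite /B ler_pM2l //; exact: tt_mono.
- by rewrite hc2 natrD addrC lerD2r.
Qed.

Lemma tv_sym (R : realType) (al be : R) X Y : tversky al be X Y = tversky al be Y X.
Proof. by rewrite /tversky /msd /Msd fsetUC fsetIC minnC maxnC. Qed.

Lemma tv_ge0 (R : realType) (al be : R) X Y :
  0 <= al -> al <= 2^-1 -> 0 < be -> 0 <= tversky al be X Y.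
Proof. by move=> h0 h1 hb; rewrite tv_eq rf_ge0 // mulr_ge0 ?tt_ge0 // ltW. Qed.

Lemma tv_zero (R : realType) (al be : R) X Y :
  0 <= al -> al <= 2^-1 -> 0 < be -> tversky al be X Y = 0 <-> X = Y.
Proof.
move=> h0 h1 hb; split; last first.
  by move=> ->; rewrite tv_eq fsetDv cardfs0 /tt /= !mulr0 addr0 mulr0 /rf mul0r.
rewrite tv_eq /rf => H.
have hT : be * tt al #|` X `\` Y| #|` Y `\` X| = 0.
  apply/eqP; rewrite eq_le; apply/andP; split; last by apply: mulr_ge0; [exact: ltW | exact: tt_ge0].
  rewrite leNgt; apply/negP => Hp.
  have : 0 < (be * tt al #|` X `\` Y| #|` Y `\` X|) /
    ((#|` X `&` Y|)%:R + be * tt al #|` X `\` Y| #|` Y `\` X|).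
    by rewrite divr_gt0 // ltr_pwDr.
  by rewrite H ltxx.
have hT2 : tt al #|` X `\` Y| #|` Y `\` X| = 0.
  by move/eqP: hT; rewrite mulf_eq0 gt_eqF //= => /eqP.
have [Ha Hb] := tt_ge h0 h1 #|` X `\` Y| #|` Y `\` X|.
rewrite hT2 in Ha Hb.
have g : 0 < 1 - al by lra.
rewrite pmulr_rle0 // lern0 cardfs_eq0 fsetD_eq0 in Ha.
rewrite pmulr_rle0 // lern0 cardfs_eq0 fsetD_eq0 in Hb.
by apply/eqP; rewrite eqEfsubset Ha Hb.
Qed.

Lemma ex1 (R : realType) (al be : R) :
  0 <= al <= 1 -> 0 < be ->
  tversky al be [fset 0%N] [fset 1%N] <=
  tversky al be [fset 0%N] [fset 0%N; 1%N] + tversky al be [fset 0%N; 1%N] [fset 1%N] ->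
  1 <= be * (1 - al).
Proof.
move=> /andP[h0 h1] hb.
have E1 : [fset 0%N] `\` [fset 1%N] = [fset 0%N].
  by apply/fsetP => x; rewrite !inE; case: x => [|[|x]].
have E2 : [fset 1%N] `\` [fset 0%N] = [fset 1%N].
  by apply/fsetP => x; rewrite !inE; case: x => [|[|x]].
have E3 : [fset 0%N] `&` [fset 1%N] = fset0.
  by apply/fsetP => x; rewrite !inE; case: x => [|[|x]].
have E4 : [fset 0%N] `\` [fset 0%N; 1%N] = fset0.
  by apply/fsetP => x; rewrite !inE; case: x => [|[|x]].
have E5 : [fset 0%N; 1%N] `\` [fset 0%N] = [fset 1%N].
  by apply/fsetP => x; rewrite !inE; case: x => [|[|x]].
have E6 : [fset 0%N] `&` [fset 0%N; 1%N] = [fset 0%N].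
  by apply/fsetP => x; rewrite !inE; case: x => [|[|x]].
have E7 : [fset 0%N; 1%N] `\` [fset 1%N] = [fset 0%N].
  by apply/fsetP => x; rewrite !inE; case: x => [|[|x]].
have E8 : [fset 1%N] `\` [fset 0%N; 1%N] = fset0.
  by apply/fsetP => x; rewrite !inE; case: x => [|[|x]].
have E9 : [fset 0%N; 1%N] `&` [fset 1%N] = [fset 1%N].
  by apply/fsetP => x; rewrite !inE; case: x => [|[|x]].
rewrite !tv_eq E1 E2 E3 E4 E5 E6 E7 E8 E9 !cardfs1 cardfs0 /tt /rf /=.
rewrite !minnn !maxnn min0n minn0 max0n maxn0 /=.
have -> : al * 1 + (1 - al) * 1 = 1 by ring.
have -> : al * 0 + (1 - al) * 1 = 1 - al by ring.
rewrite mulr1 add0r divff ?gt_eqF //.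
set g := be * (1 - al).
have g0 : 0 <= g by apply: mulr_ge0; lra.
rewrite -mulrDl ler_pdivlMr; last by lra.
lra.
Qed.

Lemma ex2 (R : realType) (al be : R) (n : nat) (S : {fset nat}) :
  0 <= al <= 1 -> 0 < be -> (0 < n)%N -> #|` S| = n ->
  0%N \notin S -> 1%N \notin S ->
  tversky al be (0%N |` S) (1%N |` S) <=
  tversky al be (0%N |` S) S + tversky al be S (1%N |` S) ->
  n%:R * (1 - 2 * (1 - al)) <= (1 - al) * be.
Proof.
move=> /andP[h0 h1] hb hn cS H0 H1.
have E1 : (0%N |` S) `\` (1%N |` S) = [fset 0%N].
  apply/fsetP => x; rewrite !inE; have [->|] := eqVneq x 0%N; rewrite ?(negbTE H0) //.
  by have [->|] := eqVneq x 1%N; rewrite ?(negbTE H1) //=; case: (x \in S).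
have E2 : (1%N |` S) `\` (0%N |` S) = [fset 1%N].
  apply/fsetP => x; rewrite !inE; have [->|] := eqVneq x 0%N; rewrite ?(negbTE H0) //.
  by have [->|] := eqVneq x 1%N; rewrite ?(negbTE H1) //=; case: (x \in S).
have E3 : (0%N |` S) `&` (1%N |` S) = S.
  apply/fsetP => x; rewrite !inE; have [->|] := eqVneq x 0%N; rewrite ?(negbTE H0) //.
  by have [->|] := eqVneq x 1%N; rewrite ?(negbTE H1) //=; case: (x \in S).
have E4 : (0%N |` S) `\` S = [fset 0%N].
  apply/fsetP => x; rewrite !inE; have [->|] := eqVneq x 0%N; rewrite ?(negbTE H0) //.
  by have [->|] := eqVneq x 1%N; rewrite ?(negbTE H1) //=; case: (x \in S).
have E5 : S `\` (0%N |` S) = fset0.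
  apply/fsetP => x; rewrite !inE; have [->|] := eqVneq x 0%N; rewrite ?(negbTE H0) //.
  by have [->|] := eqVneq x 1%N; rewrite ?(negbTE H1) //=; case: (x \in S).
have E6 : (0%N |` S) `&` S = S.
  apply/fsetP => x; rewrite !inE; have [->|] := eqVneq x 0%N; rewrite ?(negbTE H0) //.
  by have [->|] := eqVneq x 1%N; rewrite ?(negbTE H1) //=; case: (x \in S).
have E7 : S `\` (1%N |` S) = fset0.
  apply/fsetP => x; rewrite !inE; have [->|] := eqVneq x 0%N; rewrite ?(negbTE H0) //.
  by have [->|] := eqVneq x 1%N; rewrite ?(negbTE H1) //=; case: (x \in S).
have E8 : (1%N |` S) `\` S = [fset 1%N].
  apply/fsetP => x; rewrite !inE; have [->|] := eqVneq x 0%N; rewrite ?(negbTE H0) //.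
  by have [->|] := eqVneq x 1%N; rewrite ?(negbTE H1) //=; case: (x \in S).
have E9 : S `&` (1%N |` S) = S.
  apply/fsetP => x; rewrite !inE; have [->|] := eqVneq x 0%N; rewrite ?(negbTE H0) //.
  by have [->|] := eqVneq x 1%N; rewrite ?(negbTE H1) //=; case: (x \in S).
rewrite !tv_eq E1 E2 E3 E4 E5 E6 E7 E8 E9 !cardfs1 cardfs0 cS /tt /rf /=.
rewrite !minnn !maxnn min0n minn0 max0n maxn0 /=.
have -> : al * 1 + (1 - al) * 1 = 1 by ring.
have -> : al * 0 + (1 - al) * 1 = 1 - al by ring.
rewrite mulr1.
set g := be * (1 - al).
have g0 : 0 <= g by apply: mulr_ge0; lra.
have np : 0 < n%:R :> R by rewrite ltr0n.
rewrite -mulrDl ler_pdivrMr; last by lra.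
rewrite mulrAC ler_pdivlMr; last by lra.
rewrite /g => H.
have : be * (n%:R * (1 - 2 * (1 - al)) - (1 - al) * be) <= 0 by nra.
rewrite pmulr_rle0 //; lra.
Qed.

Lemma iota_props (m : nat) : #|` [fset x in iota 2 m] | = m /\
  0%N \notin [fset x in iota 2 m] /\ 1%N \notin [fset x in iota 2 m].
Proof.
split; first by rewrite card_fseq undup_id ?iota_uniq // size_iota.
by rewrite !inE !mem_iota.
Qed.

Theorem theorem3 (R : realType) (alpha beta : R) :
  0 <= alpha <= 1 -> 0 < beta ->
  (is_metric (tversky alpha beta) <->
   (alpha <= 2^-1 /\ 1 / (1 - alpha) <= beta)).
Proof.
move=> ha hb; have /andP[h0 h1] := ha; split.
- case=> Hnn Hid Hsym Htri.
  have g1 : 1 <= beta * (1 - alpha) := ex1 ha hb (Htri _ _ _).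
  have gp : 0 < 1 - alpha.
    rewrite ltNge; apply/negP => H.
    have : beta * (1 - alpha) <= 0 by rewrite pmulr_rle0.
    lra.
  split; last by rewrite ler_pdivrMr.
  rewrite leNgt; apply/negP => hal.
  have dp : 0 < 1 - 2 * (1 - alpha) by lra.
  set k := (1 - alpha) * beta / (1 - 2 * (1 - alpha)).
  have k0 : 0 <= k by apply: divr_ge0; [apply: mulr_ge0 | ]; lra.
  set n := (Num.bound k).+1.
  have kn : k < n%:R.
    apply: lt_le_trans (archi_boundP k0) _; by rewrite ler_nat.
  have npos : (0 < n)%N by [].
  clearbody n.
  have [cS [H0 H1]] := iota_props n.
  have := ex2 ha hb npos cS H0 H1 (Htri _ _ _).
  move: kn; rewrite /k ltr_pdivrMr //; lra.
- case=> hal hbe.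
  have g1 : 1 <= beta * (1 - alpha).
    by move: hbe; rewrite ler_pdivrMr //; lra.
  split.
  + by move=> x y; apply: tv_ge0.
  + by move=> x y; apply: tv_zero.
  + by move=> x y; apply: tv_sym.
  + by move=> x y z; apply: tv_tri.
Qed.
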